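(* For integers $2\leq n\leq\ell$ and $1\leq k\leq n-1$, let $\mathcal{S}_\ell(n,k)$ denote the set of permutations of $[\ell]$ with exactly $\ell-n$ fixed points and exactly $k$ exceedances. Then $|\mathcal{S}_\ell(n,k)|\leq\binom{\ell}{n}\cdot\theta(n,k)$, where \[\theta(n,k)=\begin{cases}1&\text{if }k=1\text{ or }k=n-1,\\ (2k+3)^n&\text{if }2\leq k<n/2,\\ (2n-2k+5)^n&\text{if }n/2\leq k\leq n-2.\end{cases}\]
   Context: A fixed point of a permutation $\sigma$ of $[\ell]$ is an $i$ with $\sigma(i)=i$; an exceedance is an index $i$ with $\sigma(i)>i$, and the number of exceedances of $\sigma$ is $|\{i:\sigma(i)>i\}|$. *)

(* Defs.v *)
From mathcomp Require Import all_boot all_fingroup.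
Set Implicit Arguments. Unset Strict Implicit. Unset Printing Implicit Defensive.

(* Permutations of [l] = {1..l} are modelled as 'S_l, permutations of 'I_l = {0..l-1}
   (shift by one; fixed points and exceedances are invariant under this shift). *)

Definition fixed_points l (s : 'S_l) : {set 'I_l} := [set i : 'I_l | s i == i].
Definition exceedances l (s : 'S_l) : {set 'I_l} := [set i : 'I_l | (i < s i)%N].

Definition Sset (l n k : nat) : {set 'S_l} :=
  [set s : 'S_l | (#|fixed_points s| == l - n) && (#|exceedances s| == k)].

(* theta(n,k); the condition k < n/2 is written 2k < n (real division) *)
Definition theta (n k : nat) : nat :=
  (if (k == 1) || (k == n - 1) then 1
  else if 2 * k < n then (2 * k + 3) ^ n
  else (2 * n - 2 * k + 5) ^ n)%N.

(* Main.v *)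
Require Import Defs.
From mathcomp Require Import all_boot all_fingroup.
From mathcomp Require Import zify.
Set Implicit Arguments. Unset Strict Implicit. Unset Printing Implicit Defensive.

Section Core.
Variable l : nat.
Implicit Types (s t : 'S_l) (i j v : 'I_l) (U : {set 'I_l}).

Definition Nset s : {set 'I_l} := [set j | s j <= j].
Definition Yset i : {set 'I_l} := [set j : 'I_l | j < i].
Definition UN s i := Yset i :\: s @: (Yset i :&: Nset s).
Definition UE s i := [set v : 'I_l | i < v] :\: s @: [set j | (s j <= j) || (i < j)].
Definition rk U v := #|[set w in U | w < v]|.
Definition rankN s i := rk (UN s i) (s i).
Definition rankE s i := rk (UE s i) (s i).

Lemma rk_inj U u v : u \in U -> v \in U -> rk U u = rk U v -> u = v.
Proof.
move=> uU vU.
have H : forall a b, a \in U -> b \in U -> (a < b)%N -> (rk U a < rk U b)%N.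
  move=> a b aU bU ab; apply: proper_card; apply/properP; split.
    by apply/subsetP=> w; rewrite !inE => /andP[-> /= h]; apply: ltn_trans h ab.
  by exists a; rewrite !inE ?aU ?ab ?ltnn.
case: (ltngtP u v) => [h|h|h] e.
- by have := H _ _ uU vU h; rewrite e ltnn.
- by have := H _ _ vU uU h; rewrite e ltnn.
- exact: val_inj.
Qed.

Lemma rk_lt U v : v \in U -> (rk U v < #|U|)%N.
Proof.
move=> vU; apply: proper_card; apply/properP; split.
  by apply/subsetP=> w; rewrite !inE => /andP[].
by exists v; rewrite // !inE ltnn andbF.
Qed.

Lemma card_UN s i : (#|UN s i| <= #|exceedances s|)%N.
Proof.
have sub : s @: (Yset i :&: Nset s) \subset Yset i.
  apply/subsetP=> x /imsetP[j]; rewrite !inE => /andP[ji sj] ->.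
  exact: leq_ltn_trans sj ji.
rewrite /UN cardsD (setIidPr sub) card_imset; last exact: perm_inj.
have -> : (#|Yset i| - #|Yset i :&: Nset s| = #|Yset i :\: Nset s|)%N by rewrite cardsD.
apply: subset_leq_card; apply/subsetP=> j; rewrite !inE => /andP[].
by rewrite -ltnNge.
Qed.

Lemma card_UE s i : (#|UE s i| <= #|exceedances s|)%N.
Proof.
rewrite -(card_imset _ (@perm_inj _ s)).
apply: subset_leq_card; apply/subsetP=> v; rewrite !inE => /andP[H _].
rewrite -(permKV s v) mem_imset; last exact: perm_inj.
rewrite inE; move: H; apply: contraR; rewrite -leqNgt => h.
by rewrite -{1}(permKV s v) mem_imset ?inE ?h //; exact: perm_inj.
Qed.

Lemma UN_mem s i : (s i < i)%N -> s i \in UN s i.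
Proof.
move=> h; rewrite !inE h andbT mem_imset; last exact: perm_inj.
by rewrite !inE ltnn.
Qed.

Lemma UE_mem s i : (i < s i)%N -> s i \in UE s i.
Proof.
move=> h; rewrite !inE h andbT mem_imset; last exact: perm_inj.
by rewrite !inE ltnn orbF -ltnNge.
Qed.

Lemma core s t :
  (forall i, (s i < i)%N = (t i < i)%N) ->
  (forall i, (i < s i)%N = (i < t i)%N) ->
  (forall i, (s i < i)%N -> rankN s i = rankN t i) ->
  (forall i, (i < s i)%N -> rankE s i = rankE t i) -> s = t.
Proof.
move=> H1 H2 R1 R2.
have eN : Nset s = Nset t by apply/setP=> j; rewrite !inE (leqNgt (s j)) (leqNgt (t j)) H2.
have step1 : forall m i, (i < m)%N -> (s i <= i)%N -> s i = t i.
  elim=> [//|m IH] i im si.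
  have IHi : forall j, (j < i)%N -> (s j <= j)%N -> s j = t j.
    by move=> j ji sj; apply: IH sj; apply: leq_trans ji _.
  case: (ltngtP (s i) i) => [lt|gt|eq].
  - have eU : UN s i = UN t i.
      rewrite /UN -eN; congr (_ :\: _); apply: eq_in_imset => j.
      by rewrite !inE => /andP[ji sj]; apply: IHi.
    apply: (@rk_inj (UN s i)); first exact: UN_mem.
      by rewrite eU; apply: UN_mem; rewrite -H1.
    by move: (R1 _ lt); rewrite /rankN eU.
  - by move: si; rewrite leqNgt gt.
  - have e2 : nat_of_ord (t i) = i.
      by apply/eqP; rewrite eqn_leq (leqNgt (t i)) (leqNgt i) -H1 -H2 eq ltnn.
    by apply: val_inj; rewrite /= e2 eq.
have step2 : forall d i, (l <= i + d)%N -> (i < s i)%N -> s i = t i.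
  elim=> [|d IH] i id si; first by move: id; rewrite addn0 leqNgt ltn_ord.
  have IHi : forall j, (i < j)%N -> (j < s j)%N -> s j = t j.
    move=> j ij sj; apply: IH sj; apply: leq_trans id _; by rewrite addnS -addSn leq_add2r.
  have eU : UE s i = UE t i.
    rewrite /UE; have -> : [set j | (s j <= j) || (i < j)] =
                          [set j | (t j <= j) || (i < j)].
      by apply/setP=> j; rewrite !inE (leqNgt (s j)) (leqNgt (t j)) H2.
    congr (_ :\: _); apply: eq_in_imset => j; rewrite inE.
    case: (leqP (t j) j) => [tj _|tj /= ij].
      by apply: (step1 l); [exact: ltn_ord | rewrite (leqNgt (s j)) H2 -leqNgt].
    by apply: IHi; rewrite // H2.
  apply: (@rk_inj (UE s i)); first exact: UE_mem.
    by rewrite eU; apply: UE_mem; rewrite -H2.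
  by move: (R2 _ si); rewrite /rankE eU.
apply/permP=> i; case: (ltngtP (s i) i) => [lt|gt|eq].
- by apply: (step1 l); [exact: ltn_ord | exact: ltnW].
- by apply: (step2 l) => //; rewrite leq_addl.
- by apply: (step1 l); [exact: ltn_ord | rewrite eq].
Qed.

End Core.
Lemma count_codes l L n :
  #|[set f : {ffun 'I_l -> 'I_L.+1} | #|[set i | f i != ord0]| == n]| = 'C(l, n) * L ^ n.
Proof.
rewrite -sum1_card.
rewrite (partition_big (fun f : {ffun 'I_l -> 'I_L.+1} => [set i | f i != ord0])
           (fun A : {set 'I_l} => #|A| == n)); last by move=> f; rewrite inE.
rewrite /= (eq_bigr (fun _ => L ^ n)); last first.
  move=> A /eqP cA.
  rewrite sum1dep_card.
  have cA' : #|[set x : 'I_l | x \in A]| = n by rewrite -cA; apply: eq_card => x; rewrite inE.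
  have cR : #|[set x : 'I_L.+1 | x != ord0]| = L.
    by rewrite (eq_card (B := predC1 ord0)) ?cardC1 ?card_ord // => x; rewrite !inE.
  transitivity #|pffun_on ord0 [set x : 'I_l | x \in A] [set x : 'I_L.+1 | x != ord0]|;
    last by rewrite card_pffun_on cR cA'.
  apply: eq_card => f; rewrite !inE.
  apply/idP/pffun_onP.
    case/andP=> _ /eqP <-; split.
      by apply/subsetP=> x; rewrite !inE.
    by move=> y /imageP[x]; rewrite !inE => xs ->.
  case=> /subsetP sub im.
  have e : [set i | f i != ord0] = A.
    apply/setP=> x; rewrite inE; apply/idP/idP.
      by move=> h; have := sub x; rewrite !inE; apply.
    move=> xA; have := im (f x); rewrite inE; apply.
    by apply/imageP; exists x; rewrite ?inE.
  by rewrite e eqxx andbT cA.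
by rewrite sum_nat_cond_const card_draws card_ord.
Qed.

Definition code l k (s : 'S_l) (i : 'I_l) : nat :=
  if (s i < i)%N then (rankN s i).+1
  else if (i < s i)%N then (k + rankE s i).+1 else 0.

Lemma rankN_lt l (s : 'S_l) (i : 'I_l) : (s i < i)%N -> (rankN s i < #|exceedances s|)%N.
Proof. by move=> h; apply: leq_trans (card_UN s i); apply: rk_lt; apply: UN_mem. Qed.

Lemma rankE_lt l (s : 'S_l) (i : 'I_l) : (i < s i)%N -> (rankE s i < #|exceedances s|)%N.
Proof. by move=> h; apply: leq_trans (card_UE s i); apply: rk_lt; apply: UE_mem. Qed.

Lemma code_le l k (s : 'S_l) (i : 'I_l) : #|exceedances s| = k -> (code k s i <= 2 * k)%N.
Proof.
move=> ck; rewrite /code; case: ifP => h1.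
  by have := rankN_lt h1; rewrite ck; lia.
case: ifP => h2 //; by have := rankE_lt h2; rewrite ck; lia.
Qed.

Lemma code_inj l k (s t : 'S_l) : #|exceedances s| = k -> #|exceedances t| = k ->
  (forall i, code k s i = code k t i) -> s = t.
Proof.
move=> cs ct H.
have K : forall (u : 'S_l) i, #|exceedances u| = k ->
   [/\ (u i < i)%N = (0 < code k u i <= k)%N, (i < u i)%N = (k < code k u i)%N,
       (u i < i)%N -> code k u i = (rankN u i).+1 &
       (i < u i)%N -> code k u i = (k + rankE u i).+1].
  move=> u i cu; rewrite /code.
  case: (ltngtP (u i) i) => [h|h|h].
  - by have := rankN_lt h; rewrite cu => h'; split => //; lia.
  - by have := rankE_lt h; rewrite cu => h'; split => //; lia.
  - by rewrite ltnn; split => //; lia.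
apply: core => i; have [a1 b1 c1 d1] := K s i cs; have [a2 b2 c2 d2] := K t i ct.
- by rewrite a1 a2 H.
- by rewrite b1 b2 H.
- move=> h; have h' : (t i < i)%N by rewrite a2 -H -a1.
  by have := H i; rewrite (c1 h) (c2 h') => -[].
- move=> h; have h' : (i < t i)%N by rewrite b2 -H -b1.
  by have := H i; rewrite (d1 h) (d2 h') => -[] /addnI.
Qed.

Lemma card_nonfixed l n (s : 'S_l) : (n <= l)%N -> #|fixed_points s| = l - n ->
  #|[set i | s i != i]| = n.
Proof.
move=> nl cf.
have e : [set i | s i != i] = ~: fixed_points s by apply/setP=> i; rewrite !inE.
have := cardsC (fixed_points s); rewrite -e cf card_ord; lia.
Qed.

Lemma gen_bound l n k : (n <= l)%N -> (#|Sset l n k| <= 'C(l, n) * (2 * k) ^ n)%N.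
Proof.
move=> nl.
pose cF (s : 'S_l) : {ffun 'I_l -> 'I_(2 * k).+1} := [ffun i => inord (code k s i)].
have cFE : forall s, s \in Sset l n k -> forall i, nat_of_ord (cF s i) = code k s i.
  move=> s; rewrite inE => /andP[_ /eqP ck] i; rewrite ffunE inordK //.
  by rewrite ltnS; apply: code_le.
rewrite -count_codes -(card_in_imset (f := cF)); last first.
  move=> s t sS tS e; have := sS; have := tS; rewrite !inE => /andP[_ /eqP ct] /andP[_ /eqP cs].
  by apply: (code_inj cs ct) => i; rewrite -cFE // -cFE // e.
apply: subset_leq_card; apply/subsetP=> _ /imsetP[s sS ->]; rewrite inE.
have := sS; rewrite inE => /andP[/eqP cf /eqP ck].
rewrite -(card_nonfixed nl cf); apply/eqP; apply: eq_card => i; rewrite !inE.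
rewrite -(inj_eq val_inj) /= cFE // /code.
case: (ltngtP (s i) i) => h //=.
- by rewrite -(inj_eq val_inj) /= (ltn_eqF h).
- by rewrite -(inj_eq val_inj) /= eq_sym (ltn_eqF h).
- by rewrite -(inj_eq val_inj) /= h eqxx.
Qed.

Lemma lt_split l (s : 'S_l) (i : 'I_l) : (s i < i)%N = (s i != i) && ~~ (i < s i)%N.
Proof.
case: (ltngtP (s i) i) => h /=.
- by rewrite -(inj_eq val_inj) /= (ltn_eqF h).
- by rewrite andbF.
- by rewrite -(inj_eq val_inj) /= h eqxx.
Qed.

Lemma minexc l (s : 'S_l) (m : 'I_l) : #|exceedances s| = 1 ->
  m \in [set i | s i != i] -> (forall j, j \in [set i | s i != i] -> (m <= j)%N) ->
  exceedances s = [set m].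
Proof.
move=> c1 mA mmin.
have smA : s m \in [set i | s i != i].
  by rewrite inE (inj_eq perm_inj); move: mA; rewrite inE.
have mE : m \in exceedances s.
  rewrite inE ltn_neqAle (mmin _ smA) andbT.
  by move: mA; rewrite inE eq_sym -(inj_eq val_inj).
have /cards1P [x ex] : #|exceedances s| == 1 by rewrite c1.
by move: mE; rewrite ex inE => /eqP ->.
Qed.

Lemma one_bound l n : (1 <= n)%N -> (n <= l)%N -> (#|Sset l n 1| <= 'C(l, n))%N.
Proof.
move=> n1 nl.
pose sp (s : 'S_l) := [set i | s i != i].
have := card_draws 'I_l n; rewrite card_ord => <-.
rewrite -(card_in_imset (f := sp)); last first.
  move=> s t; rewrite !inE => /andP[/eqP fs /eqP es] /andP[/eqP ft /eqP et] e.
  have : (0 < #|sp s|)%N by rewrite /sp (card_nonfixed nl fs).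
  case/card_gt0P => i0 i0A.
  case: (arg_minnP (fun i : 'I_l => nat_of_ord i) i0A) => m mA mmin.
  have xs := minexc es mA mmin.
  have xt : exceedances t = [set m].
    by apply: minexc => //; rewrite -/(sp t) -e.
  have r0 : forall (u : 'S_l) (i : 'I_l), #|exceedances u| = 1 -> (u i < i)%N -> rankN u i = 0.
    by move=> u i cu h; have := rankN_lt h; rewrite cu; case: (rankN u i).
  have r0' : forall (u : 'S_l) (i : 'I_l), #|exceedances u| = 1 -> (i < u i)%N -> rankE u i = 0.
    by move=> u i cu h; have := rankE_lt h; rewrite cu; case: (rankE u i).
  have T2 : forall i : 'I_l, (i < s i)%N = (i < t i)%N.
    move=> i; have h1 : (i < s i)%N = (i \in exceedances s) by rewrite inE.
    have h2 : (i < t i)%N = (i \in exceedances t) by rewrite inE.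
    by rewrite h1 h2 xs xt.
  have T1 : forall i : 'I_l, (s i < i)%N = (t i < i)%N.
    move=> i; rewrite !lt_split T2; congr (_ && _).
    have h1 : (s i != i) = (i \in sp s) by rewrite inE.
    have h2 : (t i != i) = (i \in sp t) by rewrite inE.
    by rewrite h1 h2 e.
  apply: core => //.
  - by move=> i h; rewrite r0 // r0 // -T1.
  - by move=> i h; rewrite r0' // r0' // -T2.
apply: subset_leq_card; apply/subsetP=> _ /imsetP[s sS ->]; rewrite inE.
by move: sS; rewrite inE => /andP[/eqP fs _]; rewrite /sp (card_nonfixed nl fs).
Qed.

Lemma card_below l n k (s : 'S_l) : (n <= l)%N -> #|fixed_points s| = l - n ->
  #|exceedances s| = k -> #|[set j | s j < j]| = n - k.
Proof.
move=> nl cf ce.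
have e : [set j | s j < j] = ~: (fixed_points s :|: exceedances s).
  apply/setP=> j; rewrite !inE negb_or lt_split; congr (_ && _).
have d : fixed_points s :&: exceedances s = set0.
  apply/setP=> j; rewrite !inE; apply/negbTE; apply/negP=> /andP[/eqP h].
  by rewrite h ltnn.
have := cardsC (fixed_points s :|: exceedances s).
rewrite -e cardsU d cards0 cf ce card_ord; lia.
Qed.

Lemma rev_bound l n k : (k <= n)%N -> (n <= l)%N -> (#|Sset l n k| <= #|Sset l n (n - k)|)%N.
Proof.
move=> kn nl.
pose r : 'S_l := perm (@rev_ord_inj l).
have rE : forall i, r i = rev_ord i by move=> i; rewrite permE.
have rr : forall i, r (r i) = i by move=> i; rewrite !rE rev_ordK.
pose phi (s : 'S_l) : 'S_l := (r * s * r)%g.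
have phiE : forall s i, phi s i = r (s (r i)) by move=> s i; rewrite !permM.
rewrite -(card_in_imset (f := phi)); last first.
  move=> s t _ _ e; apply/permP=> i; apply: (@perm_inj _ r).
  by have := f_equal (fun p : 'S_l => p (r i)) e; rewrite /= !phiE rr.
apply: subset_leq_card; apply/subsetP=> _ /imsetP[s sS ->].
move: sS; rewrite !inE => /andP[/eqP cf /eqP ce]; apply/andP; split; apply/eqP.
- rewrite -cf -(card_preimset _ (@perm_inj _ r)); apply: eq_card => i.
  by rewrite !inE phiE rr (inj_eq perm_inj).
- rewrite -(card_below nl cf ce) -(card_preimset _ (@perm_inj _ r)); apply: eq_card => i.
  rewrite !inE phiE !rE /= rev_ordK.
  have := ltn_ord i; have := ltn_ord (s i); lia.
Qed.

Theorem mainTheorem8 (l n k : nat) :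
  2 <= n -> n <= l -> 1 <= k -> k <= n - 1 ->
  #|Sset l n k| <= 'C(l, n) * theta n k.
Proof.
move=> n2 nl k1 kn.
rewrite /theta.
case: ifP => [/orP[/eqP -> | /eqP ->]|/norP[/eqP nk1 /eqP nk2]].
- by rewrite muln1; apply: one_bound => //; apply: leq_trans n2.
- rewrite muln1; apply: leq_trans (rev_bound _ _) _; first by lia.
    done.
  have -> : n - (n - 1) = 1 by lia.
  by apply: one_bound => //; apply: leq_trans n2.
case: ifP => h.
- apply: leq_trans (gen_bound _ nl) _; rewrite leq_mul2l leq_exp2r ?orbT //; lia.
- apply: leq_trans (rev_bound _ nl) _; first by lia.
  apply: leq_trans (gen_bound _ nl) _; rewrite leq_mul2l leq_exp2r ?orbT //; lia.
Qed.
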